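(* Let $\varepsilon\in(0,1)$ and let $\tau,\alpha,f_0,g$ be as defined in the context. If $n$ is sufficiently large, then for every $x\in\{0,1\}^n$ with $f(x)<f_0$, \[E[g(\mathcal{M}(x))]\le 2.\]
   Context: $f$ is OneMax, $f(x)=\sum_i x_i$. $\mathcal{M}$ is standard bit mutation: $\mathcal{M}(x)$ flips each bit of $x$ independently with probability $1/n$. Potential function: $\tau=\frac{4e}{\varepsilon}$, $\alpha=1-\frac1\tau\ln\big(1+\frac1\tau\big)$, $f_0=\lceil\alpha n\rceil$, and $g(x)=\tau^{f(x)-f_0}$ if $f(x)\ge f_0$ and $g(x)=0$ otherwise. *)

(* Defs.v *)
From Stdlib Require Import Reals Lra Lia ZArith List.
Import ListNotations.
Open Scope R_scope.

Fixpoint all_bitstrings (n : nat) : list (list bool) :=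
  match n with
  | O => [[]]
  | S m => flat_map (fun s => [false :: s; true :: s]) (all_bitstrings m)
  end.

Definition onemax (x : list bool) : nat := count_occ Bool.bool_dec x true.

Definition Rceil (r : R) : Z := (- Int_part (- r))%Z.

(* Probability that standard bit mutation (rate 1/n) maps x to y
   (x, y of the same length n). *)
Definition mut_prob (n : nat) (x y : list bool) : R :=
  fold_right Rmult 1
    (map (fun p : bool * bool =>
            if Bool.eqb (fst p) (snd p) then 1 - / INR n else / INR n)
         (combine x y)).

Definition tau (eps : R) : R := 4 * exp 1 / eps.
Definition alpha (eps : R) : R := 1 - / tau eps * ln (1 + / tau eps).
Definition f0 (eps : R) (n : nat) : Z := Rceil (alpha eps * INR n).

Definition gpot (eps : R) (n : nat) (x : list bool) : R :=
  if Z.leb (f0 eps n) (Z.of_nat (onemax x))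
  then powerRZ (tau eps) (Z.of_nat (onemax x) - f0 eps n)
  else 0.

Definition expected_g_mut (eps : R) (n : nat) (x : list bool) : R :=
  fold_right Rplus 0
    (map (fun y => mut_prob n x y * gpot eps n y) (all_bitstrings n)).

(* Main.v *)
Require Import Defs.
From Stdlib Require Import Reals ZArith List Lra Lia Psatz.
Import ListNotations.
Open Scope R_scope.

Definition sumR (l : list R) := fold_right Rplus 0 l.

Lemma sum_le {A} (f g : A -> R) (l : list A) :
  (forall y, In y l -> f y <= g y) ->
  fold_right Rplus 0 (map f l) <= fold_right Rplus 0 (map g l).
Proof.
  induction l as [|a l IH]; simpl; intros H; [lra|].
  apply Rplus_le_compat; auto.
Qed.

Lemma sum_scal {A} (c : R) (f : A -> R) (l : list A) :
  fold_right Rplus 0 (map (fun s => c * f s) l) = c * fold_right Rplus 0 (map f l).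
Proof. induction l as [|a l IH]; simpl; [ring|rewrite IH; ring]. Qed.

Lemma sum_flat (f : list bool -> R) (l : list (list bool)) :
  fold_right Rplus 0 (map f (flat_map (fun s => [false :: s; true :: s]) l))
  = fold_right Rplus 0 (map (fun s => f (false :: s) + f (true :: s)) l).
Proof. induction l as [|a l IH]; simpl; [ring|rewrite IH; ring]. Qed.

Definition wt (n : nat) (b c : bool) : R :=
  if Bool.eqb b c then 1 - / INR n else / INR n.

Lemma mut_cons n b x c y : mut_prob n (b :: x) (c :: y) = wt n b c * mut_prob n x y.
Proof. reflexivity. Qed.

Lemma onemax_cons c y : onemax (c :: y) = ((if c then 1 else 0) + onemax y)%nat.
Proof. unfold onemax; destruct c; simpl; reflexivity. Qed.

Fixpoint prodF (n : nat) (t : R) (x : list bool) : R :=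
  match x with
  | [] => 1
  | b :: x' => (wt n b false + wt n b true * t) * prodF n t x'
  end.

Lemma key n t x : forall m, length x = m ->
  fold_right Rplus 0 (map (fun y => mut_prob n x y * t ^ onemax y) (all_bitstrings m))
  = prodF n t x.
Proof.
  induction x as [|b x IH]; intros m Hm; simpl in Hm; subst m.
  - simpl. unfold mut_prob, onemax; simpl. ring.
  - simpl all_bitstrings. rewrite sum_flat.
    rewrite (map_ext _ (fun s => (wt n b false + wt n b true * t) *
                                 (mut_prob n x s * t ^ onemax s))).
    + rewrite sum_scal, (IH (length x)) by reflexivity. reflexivity.
    + intros s. rewrite !mut_cons, !onemax_cons. simpl. ring.
Qed.

Lemma mut_nonneg n x y : (1 <= n)%nat -> 0 <= mut_prob n x y.
Proof.
  intros Hn.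
  assert (Hp : 0 < / INR n <= 1).
  { assert (1 <= INR n) by (apply (le_INR 1); lia).
    split; [apply Rinv_0_lt_compat; lra|].
    rewrite <- Rinv_1; apply Rinv_le_contravar; lra. }
  revert y; induction x as [|b x IH]; intros [|c y].
  - unfold mut_prob; simpl; lra.
  - unfold mut_prob; simpl; lra.
  - unfold mut_prob; simpl; lra.
  - rewrite mut_cons. apply Rmult_le_pos; auto.
    unfold wt; destruct (Bool.eqb b c); lra.
Qed.

Lemma count_len x : (count_occ Bool.bool_dec x false + onemax x)%nat = length x.
Proof.
  induction x as [|b x IH]; [reflexivity|].
  rewrite onemax_cons. destruct b; simpl; unfold onemax in *; lia.
Qed.

Lemma prodF_bound n t x : (1 <= n)%nat -> 1 <= t ->
  0 <= prodF n t x <=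
  (1 + / INR n * (t - 1)) ^ count_occ Bool.bool_dec x false * t ^ onemax x.
Proof.
  intros Hn Ht.
  assert (Hp : 0 < / INR n <= 1).
  { assert (1 <= INR n) by (apply (le_INR 1); lia).
    split; [apply Rinv_0_lt_compat; lra|].
    rewrite <- Rinv_1; apply Rinv_le_contravar; lra. }
  induction x as [|b x IH]; [simpl; unfold onemax; simpl; lra|].
  rewrite onemax_cons. simpl prodF. unfold wt.
  destruct b; simpl Bool.eqb; simpl count_occ; cbv iota.
  - simpl. destruct IH as [I1 I2]. split.
    + apply Rmult_le_pos; nra.
    + replace ((1 + / INR n * (t - 1)) ^ count_occ Bool.bool_dec x false * (t * t ^ onemax x))
        with (t * ((1 + / INR n * (t - 1)) ^ count_occ Bool.bool_dec x false * t ^ onemax x)) by ring.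
      apply Rmult_le_compat; nra.
  - simpl. destruct IH as [I1 I2]. split.
    + apply Rmult_le_pos; nra.
    + replace ((1 + / INR n * (t - 1)) * (1 + / INR n * (t - 1)) ^ count_occ Bool.bool_dec x false * t ^ onemax x)
        with ((1 + / INR n * (t - 1)) * ((1 + / INR n * (t - 1)) ^ count_occ Bool.bool_dec x false * t ^ onemax x)) by ring.
      apply Rmult_le_compat; nra.
Qed.

Lemma exp_pow_le u m : 0 <= u -> (1 + u) ^ m <= exp (INR m * u).
Proof.
  intros Hu. induction m as [|m IH].
  - simpl. rewrite Rmult_0_l, exp_0. lra.
  - rewrite S_INR. replace ((INR m + 1) * u) with (u + INR m * u) by ring.
    rewrite exp_plus. simpl. apply Rmult_le_compat; try lra.
    + apply pow_le; lra.
    + apply exp_ineq1_le.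
Qed.

Theorem lemma5 (eps : R) (Heps : 0 < eps < 1) :
  exists N : nat, forall n : nat, (N <= n)%nat ->
    forall x : list bool, length x = n ->
      (Z.of_nat (onemax x) < f0 eps n)%Z ->
      expected_g_mut eps n x <= 2.
Proof.
  exists 1%nat. intros n Hn x Hlen Hk.
  set (t := tau eps).
  assert (He : 2 < exp 1) by (pose proof (exp_ineq1 1); lra).
  assert (Ht : 1 < t).
  { unfold t, tau. assert (Hi : eps * / eps = 1) by (field; lra).
    assert (0 < / eps) by (apply Rinv_0_lt_compat; lra).
    unfold Rdiv. nra. }
  assert (Hn1 : 1 <= INR n) by (apply (le_INR 1); lia).
  set (p := / INR n).
  assert (Hpn : p * INR n = 1) by (unfold p; field; lra).
  assert (Hp : 0 < p <= 1).
  { unfold p. split; [apply Rinv_0_lt_compat; lra|].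
    rewrite <- Rinv_1; apply Rinv_le_contravar; lra. }
  set (L := ln (1 + / t)).
  assert (Hit : 0 < / t < 1).
  { split; [apply Rinv_0_lt_compat; lra|]. rewrite <- Rinv_1; apply Rinv_lt_contravar; lra. }
  assert (HL : 0 < L).
  { unfold L. rewrite <- ln_1. apply ln_increasing; lra. }
  assert (Hf0 : alpha eps * INR n <= IZR (f0 eps n) < alpha eps * INR n + 1).
  { unfold f0, Rceil. destruct (base_Int_part (- (alpha eps * INR n))) as [B1 B2].
    rewrite opp_IZR. lra. }
  assert (Ha : alpha eps = 1 - / t * L) by reflexivity.
  set (k := onemax x) in *.
  set (F0 := Z.to_nat (f0 eps n)).
  assert (HF0 : Z.of_nat F0 = f0 eps n) by (unfold F0; rewrite Z2Nat.id; lia).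
  assert (HkF : (k < F0)%nat) by lia.
  assert (HFn : (F0 <= n)%nat).
  { assert (IZR (f0 eps n) < IZR (Z.of_nat n + 1)).
    { rewrite plus_IZR, <- INR_IZR_INZ. rewrite Ha in Hf0. assert (0 <= / t * L * INR n) by (apply Rmult_le_pos; [apply Rmult_le_pos|]; lra). lra. }
    apply lt_IZR in H. lia. }
  assert (HIF : INR F0 = IZR (f0 eps n)) by (rewrite INR_IZR_INZ, HF0; reflexivity).
  assert (Htp : forall m, 0 < t ^ m) by (intros; apply pow_lt; lra).
  assert (S1 : expected_g_mut eps n x <= / t ^ F0 * prodF n t x).
  { unfold expected_g_mut. rewrite <- (key n t x n Hlen), <- sum_scal.
    apply sum_le. intros y _.
    replace (/ t ^ F0 * (mut_prob n x y * t ^ onemax y))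
      with (mut_prob n x y * (t ^ onemax y / t ^ F0)) by (field; apply Rgt_not_eq, Htp).
    apply Rmult_le_compat_l; [apply mut_nonneg; lia|].
    unfold gpot. rewrite <- HF0. fold t.
    destruct (Z.leb_spec (Z.of_nat F0) (Z.of_nat (onemax y))) as [Hle|Hlt].
    - assert (Hle' : (F0 <= onemax y)%nat) by lia.
      rewrite <- Nat2Z.inj_sub by exact Hle'. rewrite <- pow_powerRZ.
      replace (onemax y) with ((onemax y - F0) + F0)%nat at 2 by lia.
      rewrite pow_add. right. field. apply Rgt_not_eq, Htp.
    - left. unfold Rdiv. apply Rmult_lt_0_compat; auto. apply Rinv_0_lt_compat; auto. }
  destruct (prodF_bound n t x Hn (Rlt_le _ _ Ht)) as [_ S2].
  pose proof (count_len x) as Hc. fold k in Hc. rewrite Hlen in Hc.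
  set (q := 1 + / INR n * (t - 1)) in *.
  set (z := count_occ Bool.bool_dec x false) in *.
  assert (Hq : 1 <= q <= t) by (unfold q; fold p; nra).
  assert (Hz : z = ((n - F0) + (F0 - k))%nat) by lia.
  assert (HF : F0 = (k + (F0 - k))%nat) by lia.
  set (d := (F0 - k)%nat) in *.
  assert (Hqd : q ^ d <= t ^ d) by (apply pow_incr; lra).
  assert (Hqm : q ^ (n - F0) <= 1 + / t).
  { apply Rle_trans with (exp (INR (n - F0) * (p * (t - 1)))).
    - unfold q. fold p. apply exp_pow_le. nra.
    - rewrite <- (exp_ln (1 + / t)) by lra. fold L.
      destruct (Req_dec (INR (n - F0) * (p * (t - 1))) L) as [E|E]; [rewrite E; lra|].
      left. apply exp_increasing.
      rewrite minus_INR by exact HFn. rewrite HIF.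
      assert (INR n - IZR (f0 eps n) <= INR n * (/ t * L)) by (rewrite Ha in Hf0; nra).
      assert (Hinv : t * / t = 1) by (field; lra).
      assert (p * (t-1) * (INR n - IZR (f0 eps n)) <= p * (t - 1) * (INR n * (/ t * L))).
      { apply Rmult_le_compat_l; nra. }
      assert (p * (t - 1) * (INR n * (/ t * L)) = (1 - / t) * L).
      { replace (p * (t - 1) * (INR n * (/ t * L))) with ((p * INR n) * ((t * / t - / t) * L)) by ring.
        rewrite Hpn, Hinv. ring. }
      nra. }
  eapply Rle_trans; [exact S1|].
  apply Rle_trans with (/ t ^ F0 * (q ^ z * t ^ k)).
  { apply Rmult_le_compat_l; [left; apply Rinv_0_lt_compat; auto|exact S2]. }
  rewrite Hz, pow_add. replace (t ^ F0) with (t ^ k * t ^ d) by (rewrite HF, pow_add; reflexivity).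
  assert (0 < t ^ k) by auto. assert (0 < t ^ d) by auto.
  replace (/ (t ^ k * t ^ d) * (q ^ (n - F0) * q ^ d * t ^ k))
    with (q ^ (n - F0) * (q ^ d / t ^ d)) by (field; lra).
  assert (q ^ d / t ^ d <= 1).
  { unfold Rdiv. apply Rmult_le_reg_r with (t ^ d); auto.
    rewrite Rmult_assoc, Rinv_l by lra. lra. }
  assert (0 <= q ^ d / t ^ d).
  { unfold Rdiv. apply Rmult_le_pos; [apply pow_le; lra| left; apply Rinv_0_lt_compat; auto]. }
  assert (0 <= q ^ (n - F0)) by (apply pow_le; lra).
  apply Rle_trans with (q ^ (n - F0) * 1); [apply Rmult_le_compat_l; lra | lra].
Qed.
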